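(* The category $\mathsf{DiGp}$ of digroups does not satisfy the (Huq=Smith) condition: there exist a digroup $X$ and congruences $R,S$ on $X$ such that $[I_R,I_S]=0$ but $[R,S]\neq 0$.
   Context: A digroup is a triple $(G,*,\circ)$ where $(G,* )$, $(G,\circ)$ are groups on the same set $G$ with the same identity $1$; morphisms are maps that are homomorphisms for both operations; products are computed componentwise. A congruence on a digroup $X$ is an equivalence relation $R\subseteq X\times X$ that is a sub-digroup of $X\times X$; $I_R=\{x\in X: x\,R\,1\}$, a sub-digroup of $X$. For sub-digroups $U,V$ of $X$, write $[U,V]=0$ (Huq commutation) if there exists a digroup morphism $\varphi\colon U\times V\to X$ with $\varphi(u,1)=u$ and $\varphi(1,v)=v$ for all $u\in U,v\in V$. For congruences $R,S$ on $X$, let $R\times_X S=\{(x,y,z)\in X^3: x\,R\,y,\ y\,S\,z\}$ (a sub-digroup of $X^3$); write $[R,S]=0$ (Smith commutation) if there exists a digroup morphism $p\colon R\times_X S\to X$ with $p(x,y,y)=x$ whenever $xRy$ and $p(y,y,z)=z$ whenever $ySz$. The category satisfies (Huq=Smith) if for every object $X$ and all congruences $R,S$ on $X$, $[I_R,I_S]=0$ implies $[R,S]=0$. *)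

(* Defs.v *)
Record digroup : Type := Digroup {
  dcar :> Type;
  one : dcar;
  mul1 : dcar -> dcar -> dcar;
  inv1 : dcar -> dcar;
  mul2 : dcar -> dcar -> dcar;
  inv2 : dcar -> dcar;
  mul1A : forall x y z, mul1 x (mul1 y z) = mul1 (mul1 x y) z;
  mul1_1l : forall x, mul1 one x = x;
  mul1_1r : forall x, mul1 x one = x;
  mul1_Vl : forall x, mul1 (inv1 x) x = one;
  mul1_Vr : forall x, mul1 x (inv1 x) = one;
  mul2A : forall x y z, mul2 x (mul2 y z) = mul2 (mul2 x y) z;
  mul2_1l : forall x, mul2 one x = x;
  mul2_1r : forall x, mul2 x one = x;
  mul2_Vl : forall x, mul2 (inv2 x) x = one;
  mul2_Vr : forall x, mul2 x (inv2 x) = one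
}.

Arguments one {d}.
Arguments mul1 {d}.
Arguments inv1 {d}.
Arguments mul2 {d}.
Arguments inv2 {d}.

Definition sub_digroup (X : digroup) (U : X -> Prop) : Prop :=
  U one /\
  (forall x y, U x -> U y -> U (mul1 x y)) /\
  (forall x, U x -> U (inv1 x)) /\
  (forall x y, U x -> U y -> U (mul2 x y)) /\
  (forall x, U x -> U (inv2 x)).

Definition congruence (X : digroup) (R : X -> X -> Prop) : Prop :=
  (forall x, R x x) /\
  (forall x y, R x y -> R y x) /\
  (forall x y z, R x y -> R y z -> R x z) /\
  R one one /\
  (forall x y x' y', R x y -> R x' y' -> R (mul1 x x') (mul1 y y')) /\
  (forall x y, R x y -> R (inv1 x) (inv1 y)) /\
  (forall x y x' y', R x y -> R x' y' -> R (mul2 x x') (mul2 y y')) /\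
  (forall x y, R x y -> R (inv2 x) (inv2 y)).

Definition I_of (X : digroup) (R : X -> X -> Prop) : X -> Prop :=
  fun x => R x one.

(** Huq commutation [U,V] = 0: a digroup morphism phi : U x V -> X with
    phi(u,1) = u and phi(1,v) = v.  The morphism is represented by a
    function on X x X whose behaviour only matters on U x V. *)
Definition huq_commute (X : digroup) (U V : X -> Prop) : Prop :=
  exists phi : X -> X -> X,
    (forall u u' v v', U u -> U u' -> V v -> V v' ->
       phi (mul1 u u') (mul1 v v') = mul1 (phi u v) (phi u' v')) /\
    (forall u u' v v', U u -> U u' -> V v -> V v' ->
       phi (mul2 u u') (mul2 v v') = mul2 (phi u v) (phi u' v')) /\
    (forall u, U u -> phi u one = u) /\
    (forall v, V v -> phi one v = v).

Definition in_RXS (X : digroup) (R S : X -> X -> Prop) (x y z : X) : Prop :=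
  R x y /\ S y z.

(** Smith commutation [R,S] = 0: a digroup morphism p : R x_X S -> X with
    p(x,y,y) = x and p(y,y,z) = z.  Again p is a function on X^3 whose
    behaviour only matters on R x_X S. *)
Definition smith_commute (X : digroup) (R S : X -> X -> Prop) : Prop :=
  exists p : X -> X -> X -> X,
    (forall x y z x' y' z', in_RXS X R S x y z -> in_RXS X R S x' y' z' ->
       p (mul1 x x') (mul1 y y') (mul1 z z') = mul1 (p x y z) (p x' y' z')) /\
    (forall x y z x' y' z', in_RXS X R S x y z -> in_RXS X R S x' y' z' ->
       p (mul2 x x') (mul2 y y') (mul2 z z') = mul2 (p x y z) (p x' y' z')) /\
    (forall x y, R x y -> p x y y = x) /\
    (forall y z, S y z -> p y y z = z).

(* Main.v *)
Require Import Defs.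

Inductive E : Type := E0 | E1 | E2 | E3 | E4 | E5 | E6 | E7.

Definition m1 (a b : E) : E :=
  match a, b with
  | E0, E0 => E0
  | E0, E1 => E1
  | E0, E2 => E2
  | E0, E3 => E3
  | E0, E4 => E4
  | E0, E5 => E5
  | E0, E6 => E6
  | E0, E7 => E7
  | E1, E0 => E1
  | E1, E1 => E0
  | E1, E2 => E3
  | E1, E3 => E2
  | E1, E4 => E6
  | E1, E5 => E7
  | E1, E6 => E4
  | E1, E7 => E5
  | E2, E0 => E2
  | E2, E1 => E3
  | E2, E2 => E6
  | E2, E3 => E4
  | E2, E4 => E5
  | E2, E5 => E0
  | E2, E6 => E7
  | E2, E7 => E1
  | E3, E0 => E3
  | E3, E1 => E2
  | E3, E2 => E4
  | E3, E3 => E6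
  | E3, E4 => E7
  | E3, E5 => E1
  | E3, E6 => E5
  | E3, E7 => E0
  | E4, E0 => E4
  | E4, E1 => E6
  | E4, E2 => E5
  | E4, E3 => E7
  | E4, E4 => E1
  | E4, E5 => E3
  | E4, E6 => E0
  | E4, E7 => E2
  | E5, E0 => E5
  | E5, E1 => E7
  | E5, E2 => E0
  | E5, E3 => E1
  | E5, E4 => E3
  | E5, E5 => E4
  | E5, E6 => E2
  | E5, E7 => E6
  | E6, E0 => E6
  | E6, E1 => E4
  | E6, E2 => E7
  | E6, E3 => E5
  | E6, E4 => E0
  | E6, E5 => E2
  | E6, E6 => E1
  | E6, E7 => E3
  | E7, E0 => E7
  | E7, E1 => E5
  | E7, E2 => E1
  | E7, E3 => E0
  | E7, E4 => E2
  | E7, E5 => E6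
  | E7, E6 => E3
  | E7, E7 => E4
  end.

Definition m2 (a b : E) : E :=
  match a, b with
  | E0, E0 => E0
  | E0, E1 => E1
  | E0, E2 => E2
  | E0, E3 => E3
  | E0, E4 => E4
  | E0, E5 => E5
  | E0, E6 => E6
  | E0, E7 => E7
  | E1, E0 => E1
  | E1, E1 => E0
  | E1, E2 => E5
  | E1, E3 => E7
  | E1, E4 => E6
  | E1, E5 => E2
  | E1, E6 => E4
  | E1, E7 => E3
  | E2, E0 => E2
  | E2, E1 => E5
  | E2, E2 => E4
  | E2, E3 => E1
  | E2, E4 => E3
  | E2, E5 => E6
  | E2, E6 => E7
  | E2, E7 => E0
  | E3, E0 => E3
  | E3, E1 => E7
  | E3, E2 => E1
  | E3, E3 => E6
  | E3, E4 => E5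
  | E3, E5 => E0
  | E3, E6 => E2
  | E3, E7 => E4
  | E4, E0 => E4
  | E4, E1 => E6
  | E4, E2 => E3
  | E4, E3 => E5
  | E4, E4 => E1
  | E4, E5 => E7
  | E4, E6 => E0
  | E4, E7 => E2
  | E5, E0 => E5
  | E5, E1 => E2
  | E5, E2 => E6
  | E5, E3 => E0
  | E5, E4 => E7
  | E5, E5 => E4
  | E5, E6 => E3
  | E5, E7 => E1
  | E6, E0 => E6
  | E6, E1 => E4
  | E6, E2 => E7
  | E6, E3 => E2
  | E6, E4 => E0
  | E6, E5 => E3
  | E6, E6 => E1
  | E6, E7 => E5
  | E7, E0 => E7
  | E7, E1 => E3
  | E7, E2 => E0
  | E7, E3 => E4
  | E7, E4 => E2
  | E7, E5 => E1
  | E7, E6 => E5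
  | E7, E7 => E6
  end.

Definition i1 (a : E) : E :=
  match a with
  | E0 => E0
  | E1 => E1
  | E2 => E5
  | E3 => E7
  | E4 => E6
  | E5 => E2
  | E6 => E4
  | E7 => E3
  end.

Definition i2 (a : E) : E :=
  match a with
  | E0 => E0
  | E1 => E1
  | E2 => E7
  | E3 => E5
  | E4 => E6
  | E5 => E3
  | E6 => E4
  | E7 => E2
  end.

Definition inI (a : E) : bool :=
  match a with E0 | E1 | E4 | E6 => true | _ => false end.

Ltac bf3 := intros x y z; destruct x, y, z; reflexivity.
Ltac bf1 := intros x; destruct x; reflexivity.

Definition X8 : digroup.
Proof.
  refine (@Digroup E E0 m1 i1 m2 i2 _ _ _ _ _ _ _ _ _ _);
  first [bf3 | bf1].
Defined.

Definition Rr (x y : X8) : Prop := inI (m1 x (i1 y)) = true.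

Lemma Rr_cong : congruence X8 Rr.
Proof.
  unfold congruence, Rr; cbn.
  split; [intros x; destruct x; reflexivity|].
  split; [intros x y H; destruct x, y; try discriminate; reflexivity|].
  split; [intros x y z H H'; destruct x, y; try discriminate; destruct z; try discriminate; reflexivity|].
  split; [reflexivity|].
  split; [intros x y x' y' H H'; destruct x, y; try discriminate; destruct x', y'; try discriminate; reflexivity|].
  split; [intros x y H; destruct x, y; try discriminate; reflexivity|].
  split; [intros x y x' y' H H'; destruct x, y; try discriminate; destruct x', y'; try discriminate; reflexivity|].
  intros x y H; destruct x, y; try discriminate; reflexivity.
Qed.

Lemma Rr_huq : huq_commute X8 (I_of X8 Rr) (I_of X8 Rr).
Proof.
  exists m1. unfold I_of, Rr; cbn.
  split; [intros u u' v v' H1 H2 H3 H4; destruct u; try discriminate; destruct u'; try discriminate;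
          destruct v; try discriminate; destruct v'; try discriminate; reflexivity|].
  split; [intros u u' v v' H1 H2 H3 H4; destruct u; try discriminate; destruct u'; try discriminate;
          destruct v; try discriminate; destruct v'; try discriminate; reflexivity|].
  split; intros u H; destruct u; try discriminate; reflexivity.
Qed.

Lemma Rr_not_smith : ~ smith_commute X8 Rr Rr.
Proof.
  intros [p [h1 [h2 [hl hr]]]].
  change (@mul1 X8) with m1 in h1; change (@mul2 X8) with m2 in h2.
  assert (A : p (m1 (m1 E1 E3) E0) (m1 (m1 E0 E3) E0) (m1 (m1 E0 E3) E1)
              = m1 (m1 (p E1 E0 E0) (p E3 E3 E3)) (p E0 E0 E1)).
  { rewrite (h1 (m1 E1 E3) (m1 E0 E3) (m1 E0 E3) E0 E0 E1); [| split; reflexivity | split; reflexivity].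
    rewrite (h1 E1 E0 E0 E3 E3 E3); [| split; reflexivity | split; reflexivity].
    reflexivity. }
  assert (B : p (m2 (m2 E6 E3) E0) (m2 (m2 E0 E3) E0) (m2 (m2 E0 E3) E6)
              = m2 (m2 (p E6 E0 E0) (p E3 E3 E3)) (p E0 E0 E6)).
  { rewrite (h2 (m2 E6 E3) (m2 E0 E3) (m2 E0 E3) E0 E0 E6); [| split; reflexivity | split; reflexivity].
    rewrite (h2 E6 E0 E0 E3 E3 E3); [| split; reflexivity | split; reflexivity].
    reflexivity. }
  rewrite (hl E1 E0) in A by reflexivity.
  rewrite (hl E3 E3) in A by reflexivity.
  rewrite (hr E0 E1) in A by reflexivity.
  rewrite (hl E6 E0) in B by reflexivity.
  rewrite (hl E3 E3) in B by reflexivity.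
  rewrite (hr E0 E6) in B by reflexivity.
  cbn in A, B. rewrite A in B. discriminate B.
Qed.

Theorem proposition3p6 :
  exists (X : digroup) (R S : X -> X -> Prop),
    congruence X R /\ congruence X S /\
    huq_commute X (I_of X R) (I_of X S) /\
    ~ smith_commute X R S.
Proof.
  exists X8, Rr, Rr.
  split; [exact Rr_cong|]. split; [exact Rr_cong|].
  split; [exact Rr_huq| exact Rr_not_smith].
Qed.
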